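(* For every $n\ge 3$, the cycle $C_n$ on $n$ vertices satisfies $\phi(C_n)\le 6^{n/4}$, with equality if and only if $n=4$.
   Context: A subset $F$ of vertices of a graph $G$ is a dissociation set if $G[F]$ has maximum degree at most $1$; a maximal dissociation set is one not properly contained in another dissociation set; $\phi(G)$ is the number of maximal dissociation sets of $G$. *)

(* Defs.v *)
From mathcomp Require Import all_boot.
Set Implicit Arguments. Unset Strict Implicit. Unset Printing Implicit Defensive.

(* A simple graph is given by a symmetric irreflexive adjacency relation [e]
   on a finite vertex type [T]. *)

Definition dissociation_set (T : finType) (e : rel T) (F : {set T}) : bool :=
  [forall x in F, #|[set y in F | e x y]| <= 1].

Definition maximal_dissociation_set (T : finType) (e : rel T) (F : {set T}) : bool :=
  maxset (dissociation_set e) F.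

Definition phi (T : finType) (e : rel T) : nat :=
  #|[set F : {set T} | maximal_dissociation_set e F]|.

(* The cycle C_n on vertex set 'I_n = {0,...,n-1}: i ~ j iff j = i+1 mod n
   or i = j+1 mod n (a simple cycle for n >= 3). *)
Definition cycle_adj (n : nat) : rel 'I_n :=
  fun i j => (val j == (val i).+1 %% n) || (val i == (val j).+1 %% n).
Arguments cycle_adj : clear implicits.

(* Main.v *)
Require Import Defs.
From mathcomp Require Import all_boot.
From mathcomp Require Import zify.
Set Implicit Arguments. Unset Strict Implicit. Unset Printing Implicit Defensive.

Definition cond3 (a b c : bool) := ~~ ((a == b) && (b == c)).
Definition cond4 (a b c d : bool) :=
  ~~ ([&& ~~ a, b, ~~ c & ~~ d] || [&& ~~ a, ~~ b, c & ~~ d]).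

Fixpoint goodw (s : seq bool) : bool :=
  match s with
  | a :: ((b :: c :: t) as s') =>
      [&& cond3 a b c, (match t with d :: _ => cond4 a b c d | [::] => true end)
        & goodw s']
  | _ => true
  end.

Lemma goodwP s :
  (forall j, j.+2 < size s -> cond3 (nth false s j) (nth false s j.+1) (nth false s j.+2)) ->
  (forall j, j.+3 < size s ->
     cond4 (nth false s j) (nth false s j.+1) (nth false s j.+2) (nth false s j.+3)) ->
  goodw s.
Proof.
elim: s => [|a s IH] //.
case: s IH => [|b [|c t]] IH H3 H4 //.
rewrite [goodw _]/=; apply/and3P; split.
- exact: (H3 0).
- case: t IH H3 H4 => [|d t] // IH H3 H4; exact: (H4 0).
- apply: IH => j hj; [exact: (H3 j.+1) | exact: (H4 j.+1)].
Qed.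

Lemma goodw_cons a s : goodw (a :: s) -> goodw s.
Proof. by case: s => [|b [|c t]] //= /and3P[]. Qed.

Lemma goodw_catr u v : goodw (u ++ v) -> goodw v.
Proof. elim: u => [|a u IH] //= H; apply: IH; exact: goodw_cons H. Qed.

Lemma goodw_catl u v : goodw (u ++ v) -> goodw u.
Proof.
elim: u => [|a u IH] // H.
case: u IH H => [|b [|c t]] // IH H.
move: H; rewrite cat_cons [goodw _]/= => /and3P[h1 h2 h3].
apply/and3P; split => //.
- by case: t IH h2 h3.
- exact: IH.
Qed.

Fixpoint words n : seq (seq bool) :=
  if n is k.+1 then map (cons true) (words k) ++ map (cons false) (words k)
  else [:: [::]].

Lemma mem_words n s : (s \in words n) = (size s == n).
Proof.
elim: n s => [|n IH] [|b s] /=; rewrite ?mem_seq1 //.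
- by rewrite mem_cat; apply/orP => -[] /mapP [x _].
- rewrite mem_cat eqSS -IH; case: b.
  + rewrite mem_map; last by move=> x y [].
    by apply/idP/idP => [/orP[] // /mapP[x _]|->].
  + rewrite mem_map; last by move=> x y [].
    by apply/idP/idP => [/orP[/mapP[x _]|] //|->]; rewrite orbT.
Qed.

Lemma uniq_words n : uniq (words n).
Proof.
elim: n => [|n IH] //=.
rewrite cat_uniq !map_inj_uniq ?IH //=; try by move=> x y [].
rewrite andbT; apply/hasPn => x /mapP[y _ ->]; apply/negP => /mapP[z _].
done.
Qed.

Definition L n := count goodw (words n).

Lemma L_mul a b : L (a + b) <= L a * L b.
Proof.
rewrite /L -!size_filter -(size_allpairs cat).
apply: uniq_leq_size; first exact/filter_uniq/uniq_words.
move=> w; rewrite mem_filter mem_words => /andP[gw /eqP sw].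
have g1 : goodw (take a w) by apply: (goodw_catl (v := drop a w)); rewrite cat_take_drop.
have g2 : goodw (drop a w) by apply: (goodw_catr (u := take a w)); rewrite cat_take_drop.
rewrite -(cat_take_drop a w).
apply: allpairs_f; rewrite mem_filter mem_words.
- by rewrite g1 /= size_takel // sw leq_addr.
- by rewrite g2 /= size_drop sw addKn.
Qed.

Lemma L7 : L 7 = 22. Proof. by vm_compute. Qed.
Lemma L8 : L 8 = 30. Proof. by vm_compute. Qed.
Lemma L9 : L 9 = 42. Proof. by vm_compute. Qed.
Lemma L10 : L 10 = 59. Proof. by vm_compute. Qed.
Lemma L11 : L 11 = 83. Proof. by vm_compute. Qed.
Lemma L12 : L 12 = 116. Proof. by vm_compute. Qed.
Lemma L13 : L 13 = 162. Proof. by vm_compute. Qed.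

Lemma L_bound n : 7 <= n -> L n ^ 4 < 6 ^ n.
Proof.
elim: n {-2}n (leqnn n) => [|k IH] n hn h7; first lia.
have [hs|hb] := leqP n 13.
  have: n \in [:: 7; 8; 9; 10; 11; 12; 13] by rewrite !inE; lia.
  by rewrite !inE => /orP[/eqP->|/orP[/eqP->|/orP[/eqP->|/orP[/eqP->|/orP[/eqP->|/orP[/eqP->|/eqP->]]]]]];
    rewrite ?L7 ?L8 ?L9 ?L10 ?L11 ?L12 ?L13; lia.
have -> : n = (n - 7) + 7 by lia.
have Hm : L (n - 7) ^ 4 < 6 ^ (n - 7) by apply: IH; lia.
apply: (leq_ltn_trans (n := (L (n - 7) * L 7) ^ 4)).
  by rewrite leq_exp2r // L_mul.
rewrite expnMn expnD; apply: ltn_mul; first exact: Hm.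
rewrite L7; lia.
Qed.

Section Gen.
Variables (T : finType) (e : rel T).
Definition nb (F : {set T}) x := [set y in F | e x y].

Lemma dis_sub (A B : {set T}) : dissociation_set e B -> A \subset B -> dissociation_set e A.
Proof.
move=> /forall_inP dB sAB; apply/forall_inP => x xA.
apply: leq_trans (dB x (subsetP sAB x xA)).
apply: subset_leq_card; apply/subsetP => y; rewrite !inE => /andP[yA ->].
by rewrite (subsetP sAB y yA).
Qed.

Lemma maxI (F : {set T}) : dissociation_set e F ->
  (forall v, v \notin F -> ~~ dissociation_set e (v |: F)) ->
  maximal_dissociation_set e F.
Proof.
move=> dF H; apply/maxsetP; split => // B dB sFB.
apply/eqP; rewrite eqEsubset andbC sFB /=; apply/subsetP => v vB.
apply/negPn/negP => vF; move/negP: (H v vF); apply.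
apply: (@dis_sub _ B dB); by rewrite subUset sub1set vB.
Qed.

Lemma maxE (F : {set T}) : maximal_dissociation_set e F ->
  dissociation_set e F /\ forall v, v \notin F -> ~~ dissociation_set e (v |: F).
Proof.
move=> /maxsetP[dF H]; split => // v vF; apply/negP => dv.
have := H _ dv (subsetUr _ _) => /setP /(_ v); rewrite !inE eqxx /=.
by move/negbTE: vF => ->.
Qed.

Lemma nb_le1 (F : {set T}) x z : (forall y, y \in F -> e x y -> y = z) -> #|nb F x| <= 1.
Proof.
move=> H; rewrite -(cards1 z); apply: subset_leq_card; apply/subsetP => y.
by rewrite !inE => /andP[yF exy]; rewrite (H y yF exy).
Qed.

Lemma nb_0 (F : {set T}) x : (forall y, y \in F -> e x y -> False) -> #|nb F x| = 0.
Proof.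
move=> H; apply/eqP; rewrite cards_eq0; apply/eqP/setP => y; rewrite !inE.
by apply/negP => /andP[yF exy]; apply: (H y yF exy).
Qed.

Lemma dis_add (F : {set T}) v : dissociation_set e F -> ~~ e v v ->
  #|nb F v| <= 1 ->
  (forall u, u \in F -> e u v -> #|nb F u| = 0) ->
  dissociation_set e (v |: F).
Proof.
move=> /forall_inP dF nvv hv hu; apply/forall_inP => x.
rewrite in_setU1 => /orP[/eqP->|xF].
- apply: leq_trans hv; apply: subset_leq_card; apply/subsetP => y.
  rewrite !inE => /andP[/orP[/eqP->|yF] evy]; first by rewrite evy in nvv.
  by rewrite yF.
- case exv: (e x v).
  + apply: (leq_trans (n := #|v |: nb F x|)).
      apply: subset_leq_card; apply/subsetP => y.
      by rewrite !inE => /andP[/orP[->|->] ->] //; rewrite orbT.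
    by rewrite cardsU1 (hu x xF exv) addn0 leq_b1.
  + apply: leq_trans (dF x xF); apply: subset_leq_card; apply/subsetP => y.
    rewrite !inE => /andP[/orP[/eqP->|yF] exy]; first by rewrite exy in exv.
    by rewrite yF.
Qed.
End Gen.

Definition succ (n a : nat) := if a.+1 == n then 0 else a.+1.

Lemma modS_small n r : r < n -> r.+1 %% n = succ n r.
Proof.
move=> h; rewrite /succ; case: eqP => [->|hne]; first by rewrite modnn.
rewrite modn_small //; lia.
Qed.

Section Cyc.
Variables (n : nat) (h3 : 3 <= n).
Let hn : 0 < n. Proof. lia. Qed.
Definition V (k : nat) : 'I_n := Ordinal (ltn_pmod k hn).
Local Notation e := (cycle_adj n).

Lemma adjE (x y : 'I_n) : e x y = ((y : nat) == succ n x) || ((x : nat) == succ n y).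
Proof. by rewrite /cycle_adj !modS_small ?ltn_ord. Qed.

Lemma valV k : (V k : nat) = k %% n. Proof. by []. Qed.
Lemma modS k : k.+1 %% n = succ n (k %% n).
Proof. by rewrite -addn1 -modnDml addn1 modS_small // ltn_pmod. Qed.

Lemma succ_lt a : a < n -> succ n a < n.
Proof. rewrite /succ; case: ifP => /eqP; lia. Qed.

Lemma e_sym x y : e x y = e y x.
Proof. by rewrite /cycle_adj orbC. Qed.

Lemma e_irr x : ~~ e x x.
Proof.
rewrite adjE orbb; have := ltn_ord x.
move=> hx; apply/eqP; rewrite /succ; case: ifP => /eqP; lia.
Qed.

Lemma e_left k : e (V k.+1) (V k).
Proof. by rewrite adjE !valV modS eqxx orbT. Qed.

Lemma e_right k : e (V k.+1) (V k.+2).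
Proof. by rewrite adjE !valV !modS eqxx. Qed.

Lemma succ_inj a b : a < n -> b < n -> succ n a = succ n b -> a = b.
Proof. rewrite /succ; do 2 case: ifP => /eqP; lia. Qed.

Lemma e_nb k y : e (V k.+1) y -> y = V k \/ y = V k.+2.
Proof.
rewrite adjE !valV !modS => /orP[/eqP h|/eqP h].
- by right; apply: val_inj; rewrite /= h !modS.
- left; apply: val_inj => /=.
  by apply: (succ_inj (ltn_ord y) (ltn_pmod k hn)).
Qed.

Lemma V_neq k : V k != V k.+2.
Proof.
apply/eqP => /(congr1 val) /=; rewrite !modS.
have := ltn_pmod k hn; move: (k %% n) => r hr.
rewrite /succ; do 2 case: ifP => /eqP; lia.
Qed.

Definition wordF (F : {set 'I_n}) := [seq V i \in F | i <- iota 0 n].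

Lemma size_wordF F : size (wordF F) = n.
Proof. by rewrite size_map size_iota. Qed.

Lemma nth_wordF F j : j < n + 3 ->
  nth false (wordF F ++ take 3 (wordF F)) j = (V j \in F).
Proof.
move=> hj; rewrite nth_cat size_wordF; case: ltnP => h.
- by rewrite (nth_map 0) ?size_iota // nth_iota.
- rewrite nth_take; last lia.
  rewrite (nth_map 0) ?size_iota; last lia.
  rewrite nth_iota; last lia.
  rewrite add0n; congr (_ \in F); apply: val_inj => /=.
  by rewrite -[in RHS](subnK h) modnDr.
Qed.

Lemma wordF_inj : injective wordF.
Proof.
move=> F1 F2 E; apply/setP => x.
have : nth false (wordF F1) x = nth false (wordF F2) x by rewrite E.
rewrite !(nth_map 0) ?size_iota // nth_iota // add0n.
have -> : V x = x by apply: val_inj; rewrite /= modn_small.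
done.
Qed.

Section Max.
Variable F : {set 'I_n}.
Hypothesis mx : maximal_dissociation_set (cycle_adj n) F.

Lemma cond3_ok k : cond3 (V k \in F) (V k.+1 \in F) (V k.+2 \in F).
Proof.
have [dF mF] := maxE mx.
rewrite /cond3; case a: (V k \in F); case b: (V k.+1 \in F);
  case c: (V k.+2 \in F) => //=.
- move/forall_inP: dF => /(_ _ b).
  have : #|[set V k; V k.+2]| <= #|[set y in F | e (V k.+1) y]|.
    apply: subset_leq_card; apply/subsetP => y; rewrite !inE.
    by case/orP => /eqP->; rewrite ?a ?c ?e_left ?e_right.
  by rewrite cards2 V_neq => /leq_trans H /H.
- case/negP: (mF _ (negbT b)); apply: dis_add => //.
  + exact: e_irr.
  + rewrite (_ : #|_| = 0) //.
    apply: nb_0 => y yF /e_nb [] E; by rewrite -E yF in a c.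
  + move=> u uF; rewrite e_sym => /e_nb [] E; by rewrite -E uF in a c.
Qed.

Lemma cond4_ok k :
  cond4 (V k \in F) (V k.+1 \in F) (V k.+2 \in F) (V k.+3 \in F).
Proof.
have [dF mF] := maxE mx.
rewrite /cond4; case a: (V k \in F); case b: (V k.+1 \in F);
  case c: (V k.+2 \in F); case d: (V k.+3 \in F) => //=.
- case/negP: (mF _ (negbT c)); apply: dis_add => //.
  + exact: e_irr.
  + apply: (nb_le1 (z := V k.+1)) => y yF /e_nb [] // E.
    by rewrite -E yF in d.
  + move=> u uF; rewrite e_sym => /e_nb [] E; last by rewrite -E uF in d.
    rewrite E; apply: nb_0 => y yF /e_nb [] E'; by rewrite -E' yF in a c.
- case/negP: (mF _ (negbT b)); apply: dis_add => //.
  + exact: e_irr.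
  + apply: (nb_le1 (z := V k.+2)) => y yF /e_nb [] // E.
    by rewrite -E yF in a.
  + move=> u uF; rewrite e_sym => /e_nb [] E; first by rewrite -E uF in a.
    rewrite E; apply: nb_0 => y yF /e_nb [] E'; by rewrite -E' yF in b d.
Qed.

Lemma good_word : goodw (wordF F ++ take 3 (wordF F)).
Proof.
have hs : size (wordF F ++ take 3 (wordF F)) = n + 3.
  by rewrite size_cat size_takel size_wordF //.
apply: goodwP; rewrite hs => j hj; rewrite !nth_wordF; try lia.
- exact: cond3_ok.
- exact: cond4_ok.
Qed.
End Max.

Definition Cc m := count (fun w => goodw (w ++ take 3 w)) (words m).

Lemma phi_le : phi (cycle_adj n) <= Cc n.
Proof.
rewrite /phi /Cc -size_filter cardE -(size_map wordF).
apply: uniq_leq_size; first by rewrite map_inj_uniq ?enum_uniq //; exact: wordF_inj.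
move=> w /mapP[F FA ->]; rewrite mem_filter mem_words size_wordF eqxx andbT.
apply: good_word; by move: FA; rewrite mem_enum inE.
Qed.

End Cyc.

Section Refl.
Variables (T : finType) (e : rel T) (s : seq T).
Hypotheses (s_uniq : uniq s) (s_all : forall x, x \in s).

Definition dis_b (m : pred T) :=
  all (fun x => ~~ m x || (count (fun y => m y && e x y) s <= 1)) s.

Lemma count_s (P : pred T) : count P s = #|P|.
Proof.
rewrite cardE size_filter -enumT.
have hp : perm_eq s (enum T).
  apply: uniq_perm => //; first exact: enum_uniq.
  by move=> x; rewrite mem_enum s_all.
by move/permP: hp => ->.
Qed.

Lemma dis_bE (m : pred T) (F : {set T}) : (forall x, (x \in F) = m x) ->
  dissociation_set e F = dis_b m.
Proof.
move=> hm; rewrite /dissociation_set /dis_b.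
apply/forall_inP/allP => [H x _|H x xF].
- case mx: (m x) => //=; rewrite -hm in mx.
  have := H x mx; rewrite count_s.
  by rewrite (@eq_card _ _ (fun y => m y && e x y)) // => y; rewrite !inE hm.
- have := H x (s_all x); rewrite -hm xF /= count_s.
  by rewrite (@eq_card _ _ (fun y => m y && e x y)) // => y; rewrite !inE hm.
Qed.

Definition max_b (m : pred T) :=
  dis_b m && all (fun v => m v || ~~ dis_b (fun x => (x == v) || m x)) s.

Lemma max_bP (m : pred T) : max_b m -> maximal_dissociation_set e [set x | m x].
Proof.
case/andP => d /allP H; apply: maxI.
  by rewrite (dis_bE (m := m)) // => x; rewrite inE.
move=> v; rewrite inE => mv; have := H v (s_all v); rewrite (negbTE mv) /=.
by rewrite (dis_bE (m := fun x => (x == v) || m x)) // => x; rewrite !inE.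
Qed.
End Refl.

Definition ord4 : seq 'I_4 :=
  [:: @Ordinal 4 0 isT; @Ordinal 4 1 isT; @Ordinal 4 2 isT; @Ordinal 4 3 isT].

Lemma ord4_uniq : uniq ord4. Proof. by []. Qed.
Lemma ord4_all x : x \in ord4.
Proof. by case: x => [[|[|[|[|m]]]] hm] //. Qed.

Definition Sw (w : seq bool) : {set 'I_4} := [set i : 'I_4 | nth false w i].

Definition ws4 := filter (fun w => goodw (w ++ take 3 w)) (words 4).

Lemma ws4_max : all (fun w => max_b (cycle_adj 4) ord4 (fun i : 'I_4 => nth false w i)) ws4.
Proof. by vm_compute. Qed.

Lemma phi4_ge : 6 <= phi (cycle_adj 4).
Proof.
have -> : 6 = size (map Sw ws4) by rewrite size_map; vm_compute.
rewrite /phi cardE; apply: uniq_leq_size.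
  rewrite map_inj_in_uniq; first by rewrite filter_uniq // uniq_words.
  move=> w1 w2; rewrite !mem_filter !mem_words => /andP[_ /eqP s1] /andP[_ /eqP s2] E.
  apply: (@eq_from_nth _ false); first by rewrite s1 s2.
  move=> i; rewrite s1 => hi.
  have := congr1 (fun S : {set 'I_4} => (Ordinal hi) \in S) E.
  by rewrite /Sw /= !inE.
move=> S /mapP[w wi ->]; rewrite mem_enum inE.
by move/allP: ws4_max => /(_ w wi) /(max_bP ord4_uniq ord4_all).
Qed.

Lemma Cc_le_L m : Cc m <= L m.
Proof. by apply: sub_count => w /goodw_catl. Qed.

Lemma Cc3 : Cc 3 = 3. Proof. by vm_compute. Qed.
Lemma Cc4 : Cc 4 = 6. Proof. by vm_compute. Qed.
Lemma Cc5 : Cc 5 = 5. Proof. by vm_compute. Qed.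
Lemma Cc6 : Cc 6 = 5. Proof. by vm_compute. Qed.

Theorem lemma2p6 (n : nat) : 3 <= n ->
  (phi (cycle_adj n)) ^ 4 <= 6 ^ n /\
  ((phi (cycle_adj n)) ^ 4 = 6 ^ n <-> n = 4).
Proof.
move=> h3; have hp := @phi_le n h3.
have strict : n <> 4 -> phi (cycle_adj n) ^ 4 < 6 ^ n.
  move=> n4; case: (leqP n 6) => h6.
  - have : n \in [:: 3; 5; 6] by rewrite !inE; lia.
    rewrite !inE => /orP[/eqP E|/orP[/eqP E|/eqP E]]; subst n.
    + rewrite Cc3 in hp; apply: (leq_ltn_trans (n := 3 ^ 4)); last by [].
      by rewrite leq_exp2r.
    + rewrite Cc5 in hp; apply: (leq_ltn_trans (n := 5 ^ 4)); last lia.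
      by rewrite leq_exp2r.
    + rewrite Cc6 in hp; apply: (leq_ltn_trans (n := 5 ^ 4)); last lia.
      by rewrite leq_exp2r.
  - apply: (leq_ltn_trans (n := L n ^ 4)); last exact: L_bound.
    by rewrite leq_exp2r // (leq_trans hp) // Cc_le_L.
have eq4 : n = 4 -> phi (cycle_adj n) = 6.
  move=> E; subst n; apply/eqP; rewrite eqn_leq phi4_ge andbT.
  by rewrite Cc4 in hp.
have [E|NE] := eqVneq n 4.
  by rewrite (eq4 E) E; split.
split; first exact: ltnW (strict (elimN eqP NE)).
split => [H|H]; last by rewrite H in NE.
by move: (strict (elimN eqP NE)); rewrite H ltnn.
Qed.
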